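(* Let $\mathcal{D}$ be a dome over a convex polygon $P$ lying in the horizontal $xy$-plane, with the dome above it. Let $b_i$ be a vertex of $P$ with interior angle at least $120^\circ$, and let $t_1, t_2, t_3$ be the three dome triangles incident to $b_i$, in order around $b_i$, where $t_1$ and $t_3$ are incident to the two edges of $P$ at $b_i$ (possibly $t_2$ is coplanar with $t_1$ or with $t_3$, but not both). Then $t_2$ has an upward normal, and at least one of $t_1, t_3$ has a downward normal.
   Context: All equilateral triangles have unit edge length. A polyiamond is a polygon that is a union of unit equilateral triangles. A dome over a convex polygon $P$ is the surface consisting of all faces other than $P$ of a convex polyhedron that has $P$ as one face and all of whose other faces are convex polyiamonds; the dome triangles are the unit triangles composing the dome's faces. With the base $P$ in the $xy$-plane, a dome triangle or face has an upward normal if its outward normal has positive $z$-component, and a downward normal if its outward normal has negative $z$-component. *)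

(* Defs.v *)
From Stdlib Require List.
From HB Require Import structures.
From mathcomp Require Import all_boot all_order all_algebra.
From mathcomp Require Import all_classical all_reals all_analysis.
Set Implicit Arguments. Unset Strict Implicit. Unset Printing Implicit Defensive.
Import Order.TTheory GRing.Theory Num.Theory.
Local Open Scope ring_scope.
Local Open Scope classical_set_scope.

Record vec (R : realType) := V { vx : R; vy : R; vz : R }.

Definition vadd (R : realType) (u w : vec R) : vec R :=
  V (vx u + vx w) (vy u + vy w) (vz u + vz w).
Definition vsub (R : realType) (u w : vec R) : vec R :=
  V (vx u - vx w) (vy u - vy w) (vz u - vz w).
Definition vscale (R : realType) (k : R) (u : vec R) : vec R :=
  V (k * vx u) (k * vy u) (k * vz u).
Definition vzero (R : realType) : vec R := V 0 0 0.
Definition dot (R : realType) (u w : vec R) : R :=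
  vx u * vx w + vy u * vy w + vz u * vz w.
Definition cross (R : realType) (u w : vec R) : vec R :=
  V (vy u * vz w - vz u * vy w) (vz u * vx w - vx u * vz w)
    (vx u * vy w - vy u * vx w).
Definition norm (R : realType) (u : vec R) : R := Num.sqrt (dot u u).
Definition dist (R : realType) (p q : vec R) : R := norm (vsub p q).

Definition segment (R : realType) (a b : vec R) : set (vec R) :=
  [set x | exists s : R, 0 <= s <= 1 /\ x = vadd (vscale (1 - s) a) (vscale s b)].

Definition noncollinear (R : realType) (p q r : vec R) : Prop :=
  cross (vsub q p) (vsub r p) <> vzero R.

Definition triangle (R : realType) := (vec R * vec R * vec R)%type.

Definition is_vertex (R : realType) (t : triangle R) (v : vec R) : Prop :=
  v = t.1.1 \/ v = t.1.2 \/ v = t.2.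

Definition tri_set (R : realType) (t : triangle R) : set (vec R) :=
  [set x | exists al be ga : R, [/\ 0 <= al, 0 <= be, 0 <= ga, al + be + ga = 1 &
     x = vadd (vadd (vscale al t.1.1) (vscale be t.1.2)) (vscale ga t.2)]].

Definition tri_interior (R : realType) (t : triangle R) : set (vec R) :=
  [set x | exists al be ga : R, [/\ 0 < al, 0 < be, 0 < ga, al + be + ga = 1 &
     x = vadd (vadd (vscale al t.1.1) (vscale be t.1.2)) (vscale ga t.2)]].

Definition unit_equilateral (R : realType) (t : triangle R) : Prop :=
  [/\ dist t.1.1 t.1.2 = 1, dist t.1.2 t.2 = 1 & dist t.2 t.1.1 = 1].

Definition convex_polyhedron (R : realType) (K : set (vec R)) : Prop :=
  [/\ (exists H : seq (vec R * R),
         K = [set x | forall h, List.In h H -> dot h.1 x <= h.2]),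
      (exists M : R, forall x, K x -> [/\ `|vx x| <= M, `|vy x| <= M & `|vz x| <= M]) &
      (exists x (r : R), 0 < r /\ forall y, dist y x < r -> K y)].

(* the plane {dot n x = c} supports K, with K on the side dot n x <= c
   (so n is an outward normal) *)
Definition supports (R : realType) (K : set (vec R)) (n : vec R) (c : R) : Prop :=
  n <> vzero R /\ forall x, K x -> dot n x <= c.

(* F is a face (2-dimensional face, i.e. facet) of K *)
Definition face (R : realType) (K F : set (vec R)) : Prop :=
  exists (n : vec R) (c : R), [/\ supports K n c,
    F = K `&` [set x | dot n x = c] &
    exists p q r, [/\ F p, F q, F r & noncollinear p q r]].

(* A dome over P with dome triangles TS: K is a convex polyhedron having P
   as a face, lying in the xy-plane with K above it; every other face of K
   is a (convex) polyiamond, namely the union of the unit triangles of TS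
   lying in it; TS consists exactly of these composing triangles, which do
   not overlap. *)
Definition is_dome (R : realType) (K P : set (vec R)) (TS : seq (triangle R)) : Prop :=
  convex_polyhedron K /\
  face K P /\
  (forall x, P x -> vz x = 0) /\
  (forall x, K x -> 0 <= vz x) /\
  (forall t, List.In t TS ->
     unit_equilateral t /\ exists F, [/\ face K F, F <> P & (tri_set t `<=` F)]) /\
  (forall F, face K F -> F <> P ->
     F = \bigcup_(t in [set t | List.In t TS /\ tri_set t `<=` F]) tri_set t) /\
  (forall t t', List.In t TS -> List.In t' TS ->
     tri_interior t `&` tri_interior t' !=set0 -> tri_set t = tri_set t').

Definition upward_normal (R : realType) (K : set (vec R)) (t : triangle R) : Prop :=
  exists n c, [/\ supports K n c, (forall v, is_vertex t v -> dot n v = c) & 0 < vz n].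
Definition downward_normal (R : realType) (K : set (vec R)) (t : triangle R) : Prop :=
  exists n c, [/\ supports K n c, (forall v, is_vertex t v -> dot n v = c) & vz n < 0].

Definition polygon_edge (R : realType) (P : set (vec R)) (a b : vec R) : Prop :=
  a <> b /\ exists (m : vec R) (d : R), [/\ vz m = 0, m <> vzero R,
    (forall x, P x -> dot m x <= d) & P `&` [set x | dot m x = d] = segment a b].

Definition angle_at (R : realType) (b a c : vec R) : R :=
  acos (dot (vsub a b) (vsub c b) / (norm (vsub a b) * norm (vsub c b))).

Definition incident_to_edge (R : realType) (t : triangle R) (b a : vec R) : Prop :=
  exists v, [/\ is_vertex t v, v <> b & segment b a v].

Definition share_side (R : realType) (t t' : triangle R) : Prop :=
  exists u v : vec R, [/\ u <> v, is_vertex t u, is_vertex t v, is_vertex t' u & is_vertex t' v].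

(* Main.v *)
Require Import Defs.
From Stdlib Require List.
From HB Require Import structures.
From mathcomp Require Import all_boot all_order all_algebra.
From mathcomp Require Import all_classical all_reals all_analysis.
Import Order.TTheory GRing.Theory Num.Theory.
Local Open Scope ring_scope.
Local Open Scope classical_set_scope.
From mathcomp Require Import ring lra.

Section Sc.
Variable R : realFieldType.
Lemma g2 (C s x be y de : R) :
  C^+2 + s^+2 = 1 -> 1/2 <= C -> C < 1 -> 0 < s ->
  x^+2 + be^+2 = 3/4 -> 0 < be -> y^+2 + de^+2 = 3/4 -> 0 < de ->
  (x*de - be*y) <= be*s/2 - be*y*(1-C) ->
  -(x*de - be*y) <= de*s/2 - x*de*(1-C) ->
  -C/4 + s*(x+y)/2 + x*y*C + be*de = 1/2 -> 0 <= x -> 0 <= y -> False.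
Proof.
move=> hC hC1 hC2 hs hP hbe hG hde hA hB hf hx hy.
set X := x*de - be*y in hA hB.
set e := 1 - C in hA hB.
set eta := e/4 - x*y*e + s*(x+y)/2.
have HXY : X^+2 + (x*y+be*de)^+2 = 9/16.
  have -> : X^+2 + (x*y+be*de)^+2 = (x^+2+be^+2)*(y^+2+de^+2) by rewrite /X; ring.
  by rewrite hP hG; field.
have HY : x*y + be*de = 3/4 - eta.
  have -> : x*y + be*de = (-C/4 + s*(x+y)/2 + x*y*C + be*de) + C/4 - s*(x+y)/2 + x*y*(1-C) by ring.
  by rewrite hf /eta /e; field.
have Ypos : 0 < x*y + be*de by nra.
have Heta : X^+2 = eta * (3/2 - eta).
  have : X^+2 = 9/16 - (x*y+be*de)^+2 by rewrite -HXY; ring.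
  by move=> ->; rewrite HY; field.
have bede : be*de <= 3/4 by nra.
have e0 : 0 < e by rewrite /e; lra.
have eta3 : eta < 3/4 by lra.
case: (lerP 0 X) => hX.
- have hXa : X <= x*de by rewrite /X; nra.
  have hsy : 0 <= s/2 - y*e by nra.
  have h1 : X^+2 <= (be*(s/2 - y*e)) * (x*de) by nra.
  have h2 : X^+2 <= 3/4 * (x*(s/2 - y*e)).
    apply: (le_trans h1). have : 0 <= x*(s/2 - y*e) by nra. nra.
  have h3 : eta - x*(s/2 - y*e) = e/4 + s*y/2 by rewrite /eta; ring.
  have h4 : 0 < e/4 + s*y/2 by nra.
  nra.
- have hXa : - X <= be*y by rewrite /X; nra.
  have hsy : 0 <= s/2 - x*e by nra.
  have h1 : X^+2 <= (de*(s/2 - x*e)) * (be*y) by nra.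
  have h2 : X^+2 <= 3/4 * (y*(s/2 - x*e)).
    apply: (le_trans h1). have : 0 <= y*(s/2 - x*e) by nra. nra.
  have h3 : eta - y*(s/2 - x*e) = e/4 + s*x/2 by rewrite /eta; ring.
  have h4 : 0 < e/4 + s*x/2 by nra.
  nra.
Qed.
Lemma g1 (C s x be y de : R) :
  C^+2 + s^+2 = 1 -> 1/2 <= C -> C < 1 -> 0 < s ->
  x^+2 + be^+2 = 3/4 -> 0 < be -> y^+2 + de^+2 = 3/4 -> 0 < de ->
  (x*de - be*y) <= be*s/2 - be*y*(1-C) ->
  -(x*de - be*y) <= de*s/2 - x*de*(1-C) ->
  -C/4 + s*(x+y)/2 + x*y*C + be*de = 1/2 -> 0 < s/4 + C*(x+y)/2 - x*y*s.
Proof.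
move=> hC hC1 hC2 hs hP hbe hG hde hA hB hf.
have G2 := g2 C s x be y de hC hC1 hC2 hs hP hbe hG hde hA hB hf.
rewrite ltNge; apply/negP => H.
set X := x*de - be*y in hA hB.
set e := 1 - C in hA hB.
set eta := e/4 - x*y*e + s*(x+y)/2.
have HXY : X^+2 + (x*y+be*de)^+2 = 9/16.
  have -> : X^+2 + (x*y+be*de)^+2 = (x^+2+be^+2)*(y^+2+de^+2) by rewrite /X; ring.
  by rewrite hP hG; field.
have HY : x*y + be*de = 3/4 - eta.
  have -> : x*y + be*de = (-C/4 + s*(x+y)/2 + x*y*C + be*de) + C/4 - s*(x+y)/2 + x*y*(1-C) by ring.
  by rewrite hf /eta /e; field.
have Heta : X^+2 = eta * (3/2 - eta).
  have : X^+2 = 9/16 - (x*y+be*de)^+2 by rewrite -HXY; ring.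
  by move=> ->; rewrite HY; field.
have eta0 : 0 <= eta by nra.
have e0 : 0 < e by rewrite /e; lra.
have hs2 : s^+2 = e*(1+C) by rewrite /e; nra.
have h1 : C*(s*(x+y)/2) <= (x*y - 1/4) * s^+2 by nra.
have h2 : C*eta <= e*(x*y - 1/4).
  have -> : C*eta = C*e/4 - C*x*y*e + C*(s*(x+y)/2) by rewrite /eta; ring.
  have : (x*y - 1/4) * s^+2 = (x*y-1/4)*e - C*e/4 + C*x*y*e by rewrite hs2; ring.
  lra.
have hxy : 1/4 <= x*y by nra.
case: (lerP 0 x) => hx.
- have hy : 0 <= y by nra.
  exact: G2 hx hy.
- have hy : y < 0 by nra.
  have : eta <= s*(x+y)/2 by rewrite /eta; nra.
  nra.
Qed.
Lemma frame_core (c s al be q1 q2 q3 a1 a2 a3 b1 b2 b3 d1 d2 d3 : R) :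
  c^+2 + s^+2 = 1 -> c <= -1/2 -> -1 < c -> 0 < s ->
  1/4 + al^+2 + be^+2 = 1 -> 0 < be ->
  q1^+2 + q2^+2 + q3^+2 = 1 -> c*q1 + s*q2 = 1/2 -> q1/2 + al*q2 + be*q3 = 1/2 -> 0 < q3 ->
  a1 = 0 -> a1/2 + al*a2 + be*a3 = 0 -> c*a1 + s*a2 <= 0 -> a1*q1 + a2*q2 + a3*q3 <= 0 ->
  0 < a1^+2 + a2^+2 + a3^+2 ->
  b1/2 + al*b2 + be*b3 = 0 -> b1*q1 + b2*q2 + b3*q3 = 0 -> b1 <= 0 -> c*b1 + s*b2 <= 0 ->
  0 < b1^+2 + b2^+2 + b3^+2 ->
  c*d1 + s*d2 = 0 -> d1*q1 + d2*q2 + d3*q3 = 0 -> d1 <= 0 -> d1/2 + al*d2 + be*d3 <= 0 ->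
  0 < d1^+2 + d2^+2 + d3^+2 ->
  0 < b3 /\ (a3 < 0 \/ d3 < 0).
Proof.
move=> hc hc1 hc2 hs hp hbe hq hqw hpq hq3 ha1 ha2 ha3 ha4 ha0 hb1 hb2 hb3 hb4 hb0
  hd1 hd2 hd3 hd4 hd0.
set ga := c*q2 - s*q1.
have hq1 : q1 = c/2 - ga*s.
  apply/eqP; rewrite -subr_eq0; apply/eqP.
  have -> : q1 - (c/2 - ga*s) = q1*(1 - (c^+2+s^+2)) + c*(c*q1+s*q2 - 1/2) by rewrite /ga; ring.
  by rewrite hc hqw !subrr !mulr0 addr0.
have hq2 : q2 = s/2 + ga*c.
  apply/eqP; rewrite -subr_eq0; apply/eqP.
  have -> : q2 - (s/2 + ga*c) = q2*(1 - (c^+2+s^+2)) + s*(c*q1+s*q2 - 1/2) by rewrite /ga; ring.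
  by rewrite hc hqw !subrr !mulr0 addr0.
have hgq : ga^+2 + q3^+2 = 3/4.
  have : (c^+2+s^+2)*(q1^+2 + q2^+2) = (c*q1+s*q2)^+2 + ga^+2 by rewrite /ga; ring.
  rewrite hc hqw mul1r => h. lra.
rewrite ha1 in ha2 ha3 ha4 ha0.
have a2n : a2 < 0.
  have : a2 <= 0 by nra.
  rewrite le_eqVlt => /orP [/eqP a20|//].
  have a30 : a3 = 0 by rewrite a20 in ha2; nra.
  by rewrite a20 a30 in ha0; lra.
have hA' : al*q3 <= be*q2 by nra.
have a3s : be*a3 = - (al*a2) by lra.
have d1n : d1 < 0.
  rewrite lt_neqAle hd3 andbT; apply/eqP => d10.
  have d20 : d2 = 0 by rewrite d10 in hd1; nra.
  have d30 : d3 = 0 by rewrite d10 d20 in hd2; nra.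
  by rewrite d10 d20 d30 in hd0; lra.
have d3s : s*q3*d3 = d1*ga.
  have : s*(d1*q1 + d2*q2 + d3*q3) = 0 by rewrite hd2 mulr0.
  have : q2*(c*d1 + s*d2) = 0 by rewrite hd1 mulr0.
  rewrite /ga; nra.
have hB' : 0 <= s*q3/2 - al*c*q3 + be*ga.
  have : s*q3*(d1/2 + al*d2 + be*d3) <= 0 by have := mulr_gt0 hs hq3; nra.
  have -> : s*q3*(d1/2 + al*d2 + be*d3) = d1*(s*q3/2) + al*q3*(s*d2) + be*(s*q3*d3) by ring.
  have -> : s*d2 = - (c*d1) by lra.
  rewrite d3s => h.
  have : d1 * (s*q3/2 - al*c*q3 + be*ga) <= 0 by move: h; congr (_ <= _); ring.
  nra.
have sA : al*q3 - be*(-ga) <= be*s/2 - be*(-ga)*(1-(-c)).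
  rewrite hq2 in hA'; nra.
have sB : -(al*q3 - be*(-ga)) <= q3*s/2 - al*q3*(1-(-c)) by nra.
have sF : -(-c)/4 + s*(al + -ga)/2 + al*(-ga)*(-c) + be*q3 = 1/2.
  by rewrite -hpq hq1 hq2; field.
have hC : (-c)^+2 + s^+2 = 1 by rewrite sqrrN.
have hC1 : 1/2 <= -c by lra.
have hC2 : -c < 1 by lra.
have hP : al^+2 + be^+2 = 3/4 by lra.
have hG : (-ga)^+2 + q3^+2 = 3/4 by rewrite sqrrN.
have G1 := g1 (-c) s al be (-ga) q3 hC hC1 hC2 hs hP hbe hG hq3 sA sB sF.
have G2 := g2 (-c) s al be (-ga) q3 hC hC1 hC2 hs hP hbe hG hq3 sA sB sF.
split; last first.
  case: (ltrP al 0) => hal; first by left; nra.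
  case: (ltrP 0 ga) => hga.
    right; have h1 : d1*ga < 0 by nra.
    have hsq := mulr_gt0 hs hq3; rewrite -d3s in h1; nra.
  exfalso; apply: G2 => //; lra.
set X1 := al*q3 - be*q2.
set X2 := be*q1 - q3/2.
set X3 := q2/2 - al*q1.
have hX3 : 0 < X3.
  rewrite /X3 hq1 hq2.
  have -> : (s/2 + ga*c)/2 - al*(c/2 - ga*s) = s/4 + (-c)*(al + -ga)/2 - al*(-ga)*s by field.
  exact: G1.
have hX1 : X1 <= 0 by rewrite /X1; lra.
have hX12 : c*X1 + s*X2 <= 0.
  have -> : c*X1 + s*X2 = - (s*q3/2 - al*c*q3 + be*ga) by rewrite /X1 /X2 /ga; ring.
  lra.
have r1 : b2*X3 - b3*X2 = (1/2)*(b1*q1 + b2*q2 + b3*q3) - q1*(b1/2 + al*b2 + be*b3)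
  by rewrite /X2 /X3; ring.
have r2 : b3*X1 - b1*X3 = al*(b1*q1 + b2*q2 + b3*q3) - q2*(b1/2 + al*b2 + be*b3)
  by rewrite /X1 /X3; ring.
have r3 : b1*X2 - b2*X1 = be*(b1*q1 + b2*q2 + b3*q3) - q3*(b1/2 + al*b2 + be*b3)
  by rewrite /X1 /X2; ring.
rewrite hb1 hb2 !mulr0 subrr in r1 r2 r3.
have rp : X1/2 + al*X2 + be*X3 = 0 by rewrite /X1 /X2 /X3; ring.
case: (ltrP X1 0) => hX1'.
- have b30 : 0 <= b3 by nra.
  rewrite lt_neqAle b30 andbT; apply/eqP => b3e.
  rewrite -b3e in r1 r2.
  have b10 : b1 = 0 by nra.
  have b20 : b2 = 0 by nra.
  by rewrite b10 b20 -b3e in hb0; lra.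
- have X10 : X1 = 0 by lra.
  rewrite X10 in r2 r3 rp hX12.
  have hX2 : X2 < 0.
    rewrite lt_neqAle; apply/andP; split; last by nra.
    apply/eqP => X20; rewrite X20 in rp; nra.
  have b10 : b1 = 0 by nra.
  rewrite b10 in hb4 r3 hb0.
  have b2n : b2 <= 0 by nra.
  have b30 : 0 <= b3 by nra.
  rewrite lt_neqAle b30 andbT; apply/eqP => b3e.
  rewrite -b3e in r1.
  have b20 : b2 = 0 by nra.
  by rewrite b20 -b3e in hb0; lra.
Qed.
End Sc.

Lemma frame_core2 (R : realFieldType) (c s al be q1 q2 q3 a1 a2 a3 b1 b2 b3 d1 d2 d3 : R) :
  c^+2 + s^+2 = 1 -> c <= -1/2 -> -1 < c -> s != 0 ->
  1/4 + al^+2 + be^+2 = 1 -> 0 < be ->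
  q1^+2 + q2^+2 + q3^+2 = 1 -> c*q1 + s*q2 = 1/2 -> q1/2 + al*q2 + be*q3 = 1/2 -> 0 < q3 ->
  a1 = 0 -> a1/2 + al*a2 + be*a3 = 0 -> c*a1 + s*a2 <= 0 -> a1*q1 + a2*q2 + a3*q3 <= 0 ->
  0 < a1^+2 + a2^+2 + a3^+2 ->
  b1/2 + al*b2 + be*b3 = 0 -> b1*q1 + b2*q2 + b3*q3 = 0 -> b1 <= 0 -> c*b1 + s*b2 <= 0 ->
  0 < b1^+2 + b2^+2 + b3^+2 ->
  c*d1 + s*d2 = 0 -> d1*q1 + d2*q2 + d3*q3 = 0 -> d1 <= 0 -> d1/2 + al*d2 + be*d3 <= 0 ->
  0 < d1^+2 + d2^+2 + d3^+2 ->
  0 < b3 /\ (a3 < 0 \/ d3 < 0).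
Proof.
move=> hc hc1 hc2 hs hp hbe hq hqw hpq hq3 ha1 ha2 ha3 ha4 ha0 hb1 hb2 hb3 hb4 hb0
  hd1 hd2 hd3 hd4 hd0.
case: (ltrP 0 s) => hs'.
  exact: (@frame_core R c s al be q1 q2 q3 a1 a2 a3 b1 b2 b3 d1 d2 d3 hc hc1 hc2 hs' hp hbe hq hqw hpq hq3 ha1 ha2 ha3 ha4 ha0 hb1 hb2 hb3 hb4 hb0
  hd1 hd2 hd3 hd4 hd0).
have hs2 : 0 < - s by rewrite oppr_gt0 lt_neqAle hs hs'.
apply: (@frame_core R c (-s) (-al) be q1 (-q2) q3 a1 (-a2) a3 b1 (-b2) b3 d1 (-d2) d3);
  rewrite ?sqrrN ?mulrNN //.
Qed.

Section Vec.
Variable R : realType.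
Implicit Types X Y : vec R.

Lemma dotC X Y : dot X Y = dot Y X.
Proof. by rewrite /dot; ring. Qed.

Lemma dotF (u1 u2 : R) X Y : u1^+2 + u2^+2 = 1 ->
  dot X Y = dot X (V u1 u2 0) * dot Y (V u1 u2 0) + dot X (V (-u2) u1 0) * dot Y (V (-u2) u1 0)
    + vz X * vz Y.
Proof.
move=> hu; case: X => x1 x2 x3; case: Y => y1 y2 y3; rewrite /dot /=.
have -> : (x1 * u1 + x2 * u2 + x3 * 0) * (y1 * u1 + y2 * u2 + y3 * 0) +
  (x1 * - u2 + x2 * u1 + x3 * 0) * (y1 * - u2 + y2 * u1 + y3 * 0) + x3 * y3
  = (x1*y1 + x2*y2) * (u1^+2 + u2^+2) + x3*y3 by ring.
by rewrite hu mulr1.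
Qed.

Lemma dot_pos X : X <> vzero R -> 0 < dot X X.
Proof.
case: X => x y z /= hX; rewrite /dot /=.
rewrite lt_neqAle; apply/andP; split; last by nra.
apply/eqP => h; apply: hX.
have hx : x = 0 by nra.
have hy : y = 0 by nra.
have hz : z = 0 by nra.
by rewrite hx hy hz.
Qed.

Lemma core_vec (U W Pp Q N1 N2 N3 : vec R) :
 vz U = 0 -> vz W = 0 -> dot U U = 1 -> dot W W = 1 -> dot U W <= -1/2 -> -1 < dot U W ->
 dot Pp Pp = 1 -> dot Pp U = 1/2 -> 0 < vz Pp ->
 dot Q Q = 1 -> dot Q W = 1/2 -> dot Pp Q = 1/2 -> 0 < vz Q ->
 N1 <> vzero R -> dot N1 U = 0 -> dot N1 Pp = 0 -> dot N1 W <= 0 -> dot N1 Q <= 0 ->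
 N2 <> vzero R -> dot N2 Pp = 0 -> dot N2 Q = 0 -> dot N2 U <= 0 -> dot N2 W <= 0 ->
 N3 <> vzero R -> dot N3 W = 0 -> dot N3 Q = 0 -> dot N3 U <= 0 -> dot N3 Pp <= 0 ->
 0 < vz N2 /\ (vz N1 < 0 \/ vz N3 < 0).
Proof.
case: U => u1 u2 u3 /= hu3; rewrite hu3 => hWz hUU hWW hUW1 hUW2 hPP hPU hPz hQQ hQW hPQ hQz
  hN1 hN1U hN1P hN1W hN1Q hN2 hN2P hN2Q hN2U hN2W hN3 hN3W hN3Q hN3U hN3P.
have hu : u1^+2 + u2^+2 = 1 by move: hUU; rewrite /dot /= => h; nra.
set U := V u1 u2 0 in hUU hUW1 hUW2 hPU hN1U hN2U hN3U *.
set Vv := V (-u2) u1 0.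
have F := @dotF u1 u2 _ _ hu; rewrite -/U -/Vv in F.
have hUU' : dot U U = 1 by [].
have hUV : dot U Vv = 0 by rewrite /dot /=; ring.
have hWU : dot W U <= -1/2 by rewrite dotC.
have hWU2 : -1 < dot W U by rewrite dotC.
have e1 := F W W. have e2 := F Pp Pp. have e3 := F Q Q. have e4 := F Q W.
have e5 := F Pp Q. have e6 := F N1 N1. have e7 := F N2 N2. have e8 := F N3 N3.
have e9 := F N1 Pp. have e10 := F N1 W. have e11 := F N1 Q.
have e12 := F N2 Pp. have e13 := F N2 Q. have e14 := F N2 W.
have e15 := F N3 W. have e16 := F N3 Q. have e17 := F N3 Pp.
have p1 := dot_pos N1 hN1. have p2 := dot_pos N2 hN2. have p3 := dot_pos N3 hN3.
rewrite hWz !mulr0 !addr0 in e1 e4 e10 e14 e15.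
rewrite hPU in e2 e5 e9 e12 e17.
rewrite hN1U in e6 e9 e10 e11.

have hs : dot W Vv != 0.
  apply/eqP => h0; rewrite h0 mulr0 addr0 in e1; nra.
have := @frame_core2 R (dot W U) (dot W Vv) (dot Pp Vv) (vz Pp) (dot Q U) (dot Q Vv) (vz Q)
  (dot N1 U) (dot N1 Vv) (vz N1) (dot N2 U) (dot N2 Vv) (vz N2) (dot N3 U) (dot N3 Vv) (vz N3).
apply => //; rewrite ?expr2 ?hPU ?hN1U ?mul0r ?mulr0 ?add0r ?addr0; try lra.
Qed.
End Vec.

Section T.
Variable R : realType.
Lemma cos_pi3 : cos (pi / 3 : R) = 1/2.
Proof.
set t := pi / 3 : R.
have ht : t + t *+ 2 = pi by rewrite /t; field.
have hc : 0 < cos t.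
  apply: cos_gt0_pihalf; have := pi_gt0 R; rewrite /t => h; apply/andP; split; lra.
have e := cosD t (t *+ 2).
rewrite ht cospi cos_mulr2n sin_mulr2n in e.
have hs := sin2cos2 t.
set c := cos t in e hc hs *.
set s := sin t in e hs.
have e2 : (2*c - 1)^+2 * (c + 1) = 0.
  have -> : (2*c - 1)^+2 * (c + 1) = c * (c ^+ 2 *+ 2 - 1) - s * ((c * s) *+ 2) + 1 + 2*c*(s^+2 - (1 - c^+2)).
    by rewrite !mulr2n; ring.
  by rewrite -e hs subrr mulr0 addr0 addNr.
move/eqP: e2; rewrite mulf_eq0 => /orP [|]; last by move/eqP => h; lra.
rewrite sqrf_eq0 => /eqP h; lra.
Qed.

Lemma cos_2pi3 : cos (2 * pi / 3 : R) = -1/2.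
Proof.
have -> : (2 * pi / 3 : R) = (pi / 3) *+ 2 by rewrite mulr2n; field.
by rewrite cos_mulr2n cos_pi3 mulr2n; field.
Qed.

Lemma acos_bound (x : R) : -1 <= x <= 1 -> 2 * pi / 3 <= acos x -> x <= -1/2.
Proof.
move=> hx ha.
rewrite leNgt; apply/negP => hlt.
have h1 : (acos x \in `[0, pi])%R by rewrite in_itv /= acos_ge0 // acos_lepi.
have h2 : ((2 * pi / 3 : R) \in `[0, pi])%R.
  by rewrite in_itv /=; have := pi_gt0 R => h; apply/andP; split; lra.
have hcx : cos (acos x) = x by apply: acosK; rewrite in_itv /=.
have : cos (2 * pi / 3) < cos (acos x) by rewrite hcx cos_2pi3.
rewrite ltr_cos // => h. lra.
Qed.
End T.

Section G.
Set Implicit Arguments. Unset Strict Implicit.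
Variable R : realType.
Implicit Types x y z : vec R.

Lemma vecE x y : vx x = vx y -> vy x = vy y -> vz x = vz y -> x = y.
Proof. by case: x => ? ? ?; case: y => ? ? ? /= -> -> ->. Qed.

Lemma dot_subr (n x y : vec R) : dot n (vsub x y) = dot n x - dot n y.
Proof. by rewrite /dot /=; ring. Qed.

Lemma dot_ge0 x : 0 <= dot x x.
Proof. by rewrite /dot; nra. Qed.

Lemma dist1 x y : dist x y = 1 -> dot (vsub x y) (vsub x y) = 1.
Proof.
rewrite /dist /norm => h.
by rewrite -(@sqr_sqrtr _ (dot _ _)) ?dot_ge0 // h expr1n.
Qed.

Lemma dist_sym x y : dot (vsub x y) (vsub x y) = dot (vsub y x) (vsub y x).
Proof. by rewrite /dot /=; ring. Qed.

Lemma dist_rel b x y : dot (vsub x y) (vsub x y) =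
  dot (vsub x b) (vsub x b) - 2 * dot (vsub x b) (vsub y b) + dot (vsub y b) (vsub y b).
Proof. by rewrite /dot /=; ring. Qed.

Lemma unit_neq (t : triangle R) : unit_equilateral t ->
  [/\ t.1.1 <> t.1.2, t.1.2 <> t.2 & t.2 <> t.1.1].
Proof.
case=> h1 h2 h3; split => e.
- by move: h1; rewrite e /dist /norm /dot /= !subrr !mulr0 !addr0 sqrtr0 => /eqP; rewrite eq_sym oner_eq0.
- by move: h2; rewrite e /dist /norm /dot /= !subrr !mulr0 !addr0 sqrtr0 => /eqP; rewrite eq_sym oner_eq0.
- by move: h3; rewrite e /dist /norm /dot /= !subrr !mulr0 !addr0 sqrtr0 => /eqP; rewrite eq_sym oner_eq0.
Qed.

Lemma unit_vdist (t : triangle R) v v' : unit_equilateral t -> is_vertex t v -> is_vertex t v' ->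
  v <> v' -> dot (vsub v v') (vsub v v') = 1.
Proof.
move=> ht; have [h1 h2 h3] := ht; have [n1 n2 n3] := unit_neq ht.
have d1 := dist1 h1; have d2 := dist1 h2; have d3 := dist1 h3.
case=> [->|[->|->]] [->|[->|->]] // _; by rewrite ?d1 ?d2 ?d3 // dist_sym ?d1 ?d2 ?d3.
Qed.

Lemma third_vertex (t : triangle R) b u : unit_equilateral t -> is_vertex t b -> is_vertex t u ->
  b <> u -> exists p, [/\ is_vertex t p, p <> b, p <> u &
     forall v, is_vertex t v -> [\/ v = b, v = u | v = p]].
Proof.
move=> ht; have [n1 n2 n3] := unit_neq ht.
rewrite /is_vertex.
case=> [->|[->|->]] [->|[->|->]] // _.
- exists t.2; split; auto => v [->|[->|->]]; auto using Or31, Or32, Or33.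
- exists t.1.2; split; auto => v [->|[->|->]]; auto using Or31, Or32, Or33.
- exists t.2; split; auto => v [->|[->|->]]; auto using Or31, Or32, Or33.
- exists t.1.1; split; auto => v [->|[->|->]]; auto using Or31, Or32, Or33.
- exists t.1.2; split; auto => v [->|[->|->]]; auto using Or31, Or32, Or33.
- exists t.1.1; split; auto => v [->|[->|->]]; auto using Or31, Or32, Or33.
Qed.

Lemma vertex_in_tri (t : triangle R) v : is_vertex t v -> tri_set t v.
Proof.
rewrite /tri_set /=; case=> [->|[->|->]].
- exists 1, 0, 0; split => //; first by lra.
  by apply: vecE; rewrite /= ; ring.
- exists 0, 1, 0; split => //; first by lra.
  by apply: vecE; rewrite /= ; ring.
- exists 0, 0, 1; split => //; first by lra.
  by apply: vecE; rewrite /= ; ring.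
Qed.

Lemma noncol_unit (p q r : vec R) : dot (vsub q p) (vsub q p) = 1 -> dot (vsub r p) (vsub r p) = 1 ->
  dot (vsub r q) (vsub r q) = 1 -> noncollinear p q r.
Proof.
move=> h1 h2 h3 hc.
have e : dot (cross (vsub q p) (vsub r p)) (cross (vsub q p) (vsub r p)) = 0.
  by rewrite hc /dot /= !mulr0 !addr0.
have l : dot (cross (vsub q p) (vsub r p)) (cross (vsub q p) (vsub r p)) =
  dot (vsub q p) (vsub q p) * dot (vsub r p) (vsub r p) - (dot (vsub q p) (vsub r p))^+2.
  by rewrite /dot /=; ring.
have m : dot (vsub r q) (vsub r q) = dot (vsub q p) (vsub q p) - 2 * dot (vsub q p) (vsub r p)
   + dot (vsub r p) (vsub r p) by rewrite /dot /=; ring.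
rewrite h1 h2 h3 in l m; rewrite e in l.
nra.
Qed.

Lemma horiz (U W X : vec R) : vz U = 0 -> vz W = 0 -> dot U U = 1 -> dot W W = 1 ->
  dot U W <= -1/2 -> dot X X = 1 -> dot X U = 1/2 -> dot X W = 1/2 -> vz X = 0.
Proof.
case: U => u1 u2 u3; case: W => w1 w2 w3; case: X => x1 x2 x3; rewrite /dot /= => -> ->.
rewrite !mulr0 !addr0 => hU hW hUW hX hXU hXW.
have hS : (u1+w1)^+2 + (u2+w2)^+2 <= 1 by nra.
have hXS : x1*(u1+w1) + x2*(u2+w2) = 1 by lra.
have L : (x1*(u1+w1) + x2*(u2+w2))^+2 + (x1*(u2+w2) - x2*(u1+w1))^+2
   = (x1^+2 + x2^+2) * ((u1+w1)^+2 + (u2+w2)^+2) by ring.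
rewrite hXS expr1n in L.
have h0 : 0 <= x1^+2 + x2^+2 by nra.
have hS' : 0 <= 1 - ((u1+w1)^+2 + (u2+w2)^+2) by rewrite subr_ge0.
have h1 := mulr_ge0 h0 hS'.
have h2 : 0 <= (x1*(u2+w2) - x2*(u1+w1))^+2 by apply: sqr_ge0.
have : x3^+2 <= 0.
  have -> : x3^+2 = 1 - (x1^+2 + x2^+2) by rewrite -hX; ring.
  nra.
move=> h; apply/eqP; rewrite -sqrf_eq0; apply/eqP; by apply: le_anti; rewrite h sqr_ge0.
Qed.
End G.

Section D.
Set Implicit Arguments. Unset Strict Implicit.
Variable R : realType.

Lemma plane_z (n : vec R) c (p q r : vec R) : n <> vzero R -> dot n p = c -> dot n q = c ->
  dot n r = c -> noncollinear p q r -> vz p = 0 -> vz q = 0 -> vz r = 0 ->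
  forall x, (dot n x = c <-> vz x = 0).
Proof.
case: n => n1 n2 n3; case: p => p1 p2 p3; case: q => q1 q2 q3; case: r => r1 r2 r3.
rewrite /noncollinear /dot /= => hn hp hq hr hnc hp3 hq3 hr3.
rewrite hp3 hq3 hr3 in hp hq hr hnc.
set D := (q1 - p1) * (r2 - p2) - (q2 - p2) * (r1 - p1).
have hD : D != 0.
  apply/eqP => hD; apply: hnc; apply: vecE; rewrite /= ?subrr ?mulr0 ?mul0r ?subrr //.
have e1 : n1 * (q1 - p1) + n2 * (q2 - p2) = 0 by rewrite mulr0 addr0 in hp hq; lra.
have e2 : n1 * (r1 - p1) + n2 * (r2 - p2) = 0 by rewrite mulr0 addr0 in hp hr; lra.
have hn1 : n1 * D = 0.
  have -> : n1 * D = (r2 - p2) * (n1 * (q1 - p1) + n2 * (q2 - p2)) - (q2 - p2) * (n1 * (r1 - p1) + n2 * (r2 - p2)) by rewrite /D; ring.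
  by rewrite e1 e2 !mulr0 subrr.
have hn2 : n2 * D = 0.
  have -> : n2 * D = (q1 - p1) * (n1 * (r1 - p1) + n2 * (r2 - p2)) - (r1 - p1) * (n1 * (q1 - p1) + n2 * (q2 - p2)) by rewrite /D; ring.
  by rewrite e1 e2 !mulr0 subrr.
have n10 : n1 = 0 by move/eqP: hn1; rewrite mulf_eq0 (negbTE hD) orbF => /eqP.
have n20 : n2 = 0 by move/eqP: hn2; rewrite mulf_eq0 (negbTE hD) orbF => /eqP.
have n30 : n3 != 0 by apply/eqP => n30; apply: hn; rewrite n10 n20 n30.
have c0 : c = 0 by rewrite -hp n10 n20; ring.
case=> x1 x2 x3 /=; rewrite n10 n20 c0 !mul0r !add0r; split.
- by move/eqP; rewrite mulf_eq0 (negbTE n30) /= => /eqP.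
- by move=> ->; rewrite mulr0.
Qed.

Lemma face_flat (K P F : set (vec R)) : face K P -> (forall x, P x -> vz x = 0) ->
  face K F -> F <> P -> forall p q r, F p -> F q -> F r -> noncollinear p q r ->
  vz p = 0 -> vz q = 0 -> vz r = 0 -> False.
Proof.
move=> [m [d [[hm _] HP [p' [q' [r' [Pp Pq Pr hnc']]]]]]] Pz.
move=> [n [c [[hn _] HF _]]] hFP p q r Fp Fq Fr hnc pz qz rz.
have hP' : forall x, P x -> K x /\ dot m x = d by move=> x; rewrite HP.
have hF' : forall x, F x -> K x /\ dot n x = c by move=> x; rewrite HF.
have zP := plane_z hm (hP' _ Pp).2 (hP' _ Pq).2 (hP' _ Pr).2 hnc' (Pz _ Pp) (Pz _ Pq) (Pz _ Pr).
have zF := plane_z hn (hF' _ Fp).2 (hF' _ Fq).2 (hF' _ Fr).2 hnc pz qz rz.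
apply: hFP; rewrite HF HP; apply: funext => x; apply: propext; split.
- by move=> [Kx Hx]; split => //; apply/zP/zF.
- by move=> [Kx Hx]; split => //; apply/zF/zP.
Qed.

Lemma tri_data (K P : set (vec R)) TS (t : triangle R) : is_dome K P TS -> List.In t TS ->
  exists n c, [/\ supports K n c, (forall v, is_vertex t v -> K v /\ dot n v = c) &
     ~ (forall v, is_vertex t v -> vz v = 0)].
Proof.
move=> [_ [hP [Pz [_ [ht _]]]]] tin.
have [hu [F [hF hFP hsub]]] := ht t tin.
have hF0 := hF; move: hF0 => [n [c [hs HF _]]].
exists n, c; split => //.
  move=> v hv; have : F v by apply: hsub; apply: vertex_in_tri.
  by rewrite HF => -[].
move=> hz.
have iv1 : is_vertex t t.1.1 by left.
have iv2 : is_vertex t t.1.2 by right; left.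
have iv3 : is_vertex t t.2 by right; right.
have [n1 n2 n3] := unit_neq hu.
apply: (face_flat hP Pz hF hFP (p:=t.1.1) (q:=t.1.2) (r:=t.2)).
- by apply: hsub; apply: vertex_in_tri.
- by apply: hsub; apply: vertex_in_tri.
- by apply: hsub; apply: vertex_in_tri.
- apply: noncol_unit; apply: (unit_vdist hu) => //; by auto.
- exact: hz.
- exact: hz.
- exact: hz.
Qed.
End D.

Section M.
Set Implicit Arguments. Unset Strict Implicit.
Variable R : realType.
Implicit Types X Y : vec R.

Lemma dot_scale k l X Y : dot (vscale k X) (vscale l Y) = k * l * dot X Y.
Proof. by rewrite /dot /=; ring. Qed.

Lemma dot_subsq X Y : dot (vsub X Y) (vsub X Y) = dot X X - 2 * dot X Y + dot Y Y.
Proof. by rewrite /dot /=; ring. Qed.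

Lemma dot_addsq X Y : dot (vadd X Y) (vadd X Y) = dot X X + 2 * dot X Y + dot Y Y.
Proof. by rewrite /dot /=; ring. Qed.

Lemma seg_vec (b a u : vec R) : segment b a u ->
  exists s : R, 0 <= s <= 1 /\ vsub u b = vscale s (vsub a b).
Proof.
move=> [s [hs ->]]; exists s; split => //.
by apply: vecE; rewrite /=; ring.
Qed.

Lemma seg_b (b a : vec R) : segment b a b.
Proof.
exists 0; split; first by rewrite lexx ler01.
by apply: vecE; rewrite /=; ring.
Qed.

Lemma sq0 (a b c : R) : a * a + b * b + c * c = 0 -> a = 0 /\ b = 0 /\ c = 0.
Proof.
move=> h.
have ha : a * a = 0 by apply: le_anti; apply/andP; split; nra.
have hb : b * b = 0 by apply: le_anti; apply/andP; split; nra.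
have hc : c * c = 0 by apply: le_anti; apply/andP; split; nra.
by move/eqP: ha; move/eqP: hb; move/eqP: hc; rewrite !mulf_eq0 !orbb => /eqP -> /eqP -> /eqP ->.
Qed.

Lemma antipodal X Y : dot X X = 1 -> dot Y Y = 1 -> dot X Y = -1 -> Y = vscale (-1) X.
Proof.
move=> h1 h2 h3.
have h : dot (vadd X Y) (vadd X Y) = 0 by rewrite dot_addsq h1 h2 h3; lra.
clear h1 h2 h3; move: h; case: X => x1 x2 x3; case: Y => y1 y2 y3; rewrite /dot /= => h.
have [e1 [e2 e3]] := sq0 h.
apply: vecE => /=; lra.
Qed.

Lemma angle_le (b a c : vec R) (s1 s3 : R) : 0 < s1 -> 0 < s3 ->
  dot (vscale s1 (vsub a b)) (vscale s1 (vsub a b)) = 1 ->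
  dot (vscale s3 (vsub c b)) (vscale s3 (vsub c b)) = 1 ->
  2 * pi / 3 <= angle_at b a c ->
  dot (vscale s1 (vsub a b)) (vscale s3 (vsub c b)) <= -1/2.
Proof.
move=> h1 h3 hU hW hang.
set U := vscale s1 (vsub a b) in hU *; set W := vscale s3 (vsub c b) in hW *.
have hUW : -1 <= dot U W <= 1.
  have := dot_ge0 (vsub U W); have := dot_ge0 (vadd U W).
  rewrite dot_subsq dot_addsq hU hW => ha hb; apply/andP; split; lra.
move: hang; rewrite /angle_at.
set D := dot (vsub a b) (vsub c b).
set Na := norm (vsub a b); set Nc := norm (vsub c b).
have eU : s1 * s1 * dot (vsub a b) (vsub a b) = 1 by rewrite -dot_scale.
have eW : s3 * s3 * dot (vsub c b) (vsub c b) = 1 by rewrite -dot_scale.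
have Na2 : Na ^+ 2 = dot (vsub a b) (vsub a b) by rewrite /Na /norm sqr_sqrtr // dot_ge0.
have Nc2 : Nc ^+ 2 = dot (vsub c b) (vsub c b) by rewrite /Nc /norm sqr_sqrtr // dot_ge0.
have Na0 : 0 <= Na by rewrite /Na /norm sqrtr_ge0.
have Nc0 : 0 <= Nc by rewrite /Nc /norm sqrtr_ge0.
have sNa : s1 * Na = 1.
  have : (s1 * Na)^+2 = 1 by rewrite exprMn Na2 -eU; ring.
  move=> h; have : 0 <= s1 * Na by apply: mulr_ge0 => //; lra.
  nra.
have sNc : s3 * Nc = 1.
  have : (s3 * Nc)^+2 = 1 by rewrite exprMn Nc2 -eW; ring.
  move=> h; have : 0 <= s3 * Nc by apply: mulr_ge0 => //; lra.
  nra.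
have hx : D / (Na * Nc) = dot U W.
  rewrite /U /W dot_scale -/D.
  have Na' : Na != 0 by apply/eqP => e; rewrite e mulr0 in sNa; lra.
  have Nc' : Nc != 0 by apply/eqP => e; rewrite e mulr0 in sNc; lra.
  have -> : s1 = Na^-1 by apply: (mulIf Na'); rewrite sNa mulVf.
  have -> : s3 = Nc^-1 by apply: (mulIf Nc'); rewrite sNc mulVf.
  by field; apply/andP.
rewrite hx => hang.
exact: acos_bound hUW hang.
Qed.
End M.

Theorem lemma7 (R : realType) (K P : set (vec R)) (TS : seq (triangle R))
    (b a c : vec R) (t1 t2 t3 : triangle R) :
  is_dome K P TS ->
  (* b is a vertex of P with incident edges [b,a] and [b,c] *)
  polygon_edge P b a -> polygon_edge P b c -> a <> c ->
  (* interior angle at b is at least 120 degrees *)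
  2 * pi / 3 <= angle_at b a c ->
  (* t1, t2, t3 are the three dome triangles incident to b, in order *)
  List.In t1 TS -> List.In t2 TS -> List.In t3 TS ->
  is_vertex t1 b -> is_vertex t2 b -> is_vertex t3 b ->
  tri_set t1 <> tri_set t2 -> tri_set t2 <> tri_set t3 -> tri_set t1 <> tri_set t3 ->
  (forall t, List.In t TS -> is_vertex t b ->
     [\/ tri_set t = tri_set t1, tri_set t = tri_set t2 | tri_set t = tri_set t3]) ->
  share_side t1 t2 -> share_side t2 t3 ->
  incident_to_edge t1 b a -> incident_to_edge t3 b c ->
  upward_normal K t2 /\ (downward_normal K t1 \/ downward_normal K t3).
Proof.
move=> hd pa pc hac hang in1 in2 in3 vb1 vb2 vb3 _ _ _ _ sh12 sh23 inc1 inc3.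
have [_ [hP [Pz [Kz [htri _]]]]] := hd.
have hPK : forall x, P x -> K x.
  by move: hP => [m [d [_ HP _]]] x; rewrite HP => -[].
case: pa => hba [ma [da [_ _ hmle hsega]]].
case: pc => hbc [mc [dc [_ _ _ hsegc]]].
have segA : forall x, segment b a x -> P x /\ dot ma x = da by move=> x; rewrite -hsega => -[].
have segC : forall x, segment b c x -> P x /\ dot mc x = dc by move=> x; rewrite -hsegc => -[].
have Pb : P b by case: (segA b (seg_b b a)).
have bz : vz b = 0 by apply: Pz.
have [hu1 _] := htri t1 in1.
have [hu2 _] := htri t2 in2.
have [hu3 _] := htri t3 in3.
case: inc1 => u [vu1 hub segu].
case: inc3 => w [vw3 hwb segw].
have [Pu mau] := segA u segu.
have [Pw _] := segC w segw.
have uz : vz u = 0 by apply: Pz.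
have wz : vz w = 0 by apply: Pz.
have [p1 [vp1 hp1b hp1u hV1]] := third_vertex hu1 vb1 vu1 (nesym hub).
have [p3 [vp3 hp3b hp3w hV3]] := third_vertex hu3 vb3 vw3 (nesym hwb).
have [n1 [c1 [[hn1 sup1] hv1 hf1]]] := tri_data hd in1.
have [n2 [c2 [[hn2 sup2] hv2 _]]] := tri_data hd in2.
have [n3 [c3 [[hn3 sup3] hv3 hf3]]] := tri_data hd in3.
set U := vsub u b. set W := vsub w b. set Pp := vsub p1 b. set Q := vsub p3 b.
have Uz : vz U = 0 by rewrite /= uz bz subrr.
have Wz : vz W = 0 by rewrite /= wz bz subrr.
have UU : dot U U = 1 by apply: (unit_vdist hu1).
have WW : dot W W = 1 by apply: (unit_vdist hu3).
have PP : dot Pp Pp = 1 by apply: (unit_vdist hu1).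
have QQ : dot Q Q = 1 by apply: (unit_vdist hu3).
have PU : dot Pp U = 1/2.
  have := unit_vdist hu1 vp1 vu1 hp1u; rewrite (dist_rel b) -/Pp -/U PP UU => h; lra.
have QW : dot Q W = 1/2.
  have := unit_vdist hu3 vp3 vw3 hp3w; rewrite (dist_rel b) -/Q -/W QQ WW => h; lra.
have [s1 [hs1 eU]] := seg_vec segu.
have [s3 [hs3 eW]] := seg_vec segw.
have s1p : 0 < s1.
  rewrite lt_neqAle; case/andP: hs1 => -> _; rewrite andbT; apply/eqP => e.
  apply: hub; apply: vecE; move: eU; rewrite -e => /(congr1 (fun v => (vx v, vy v, vz v))) /=;
  case => ? ? ?; lra.
have s3p : 0 < s3.
  rewrite lt_neqAle; case/andP: hs3 => -> _; rewrite andbT; apply/eqP => e.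
  apply: hwb; apply: vecE; move: eW; rewrite -e => /(congr1 (fun v => (vx v, vy v, vz v))) /=;
  case => ? ? ?; lra.
have UW : dot U W <= -1/2.
  rewrite /U /W eU eW; apply: angle_le => //; by rewrite -?eU -?eW.
have UW2 : -1 < dot U W.
  rewrite ltNge; apply/negP => hle.
  have e : dot U W = -1.
    apply: le_anti; rewrite hle /=.
    have := dot_ge0 (vadd U W); rewrite dot_addsq UU WW; lra.
  have eWU := antipodal UU WW e.
  have mb : dot ma b = da by case: (segA b (seg_b b a)).
  have mw : dot ma w = da.
    have : dot ma W = - dot ma U by rewrite eWU /dot /=; ring.
    rewrite /W /U !dot_subr mau mb; lra.
  have sw : segment b a w by rewrite -hsega; split.
  have [t [ht et]] := seg_vec sw.
  rewrite /W /U et eU in eWU.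
  have tp : t + s1 != 0 by case/andP: ht => ht0 _; apply/eqP => h; clear - h ht0 s1p; lra.
  have key : forall z : R, t * z = -1 * (s1 * z) -> z = 0.
    move=> z hz; have : (t + s1) * z = 0 by rewrite mulrDl hz; ring.
    by move/eqP; rewrite mulf_eq0 (negbTE tp) /= => /eqP.
  apply: hba; apply: vecE.
  - apply/eqP; rewrite eq_sym -subr_eq0; apply/eqP; apply: key; exact: (congr1 (@vx R) eWU).
  - apply/eqP; rewrite eq_sym -subr_eq0; apply/eqP; apply: key; exact: (congr1 (@vy R) eWU).
  - apply/eqP; rewrite eq_sym -subr_eq0; apply/eqP; apply: key; exact: (congr1 (@vz R) eWU).
clear eU eW.
have Kp1 : K p1 by case: (hv1 p1 vp1).
have Kp3 : K p3 by case: (hv3 p3 vp3).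
have Ku : K u by apply: hPK.
have Kw : K w by apply: hPK.
have Pz' : 0 < vz Pp.
  rewrite /= bz subr0 lt_neqAle Kz // andbT; apply/eqP => e.
  apply: hf1 => v /hV1 [->|->|->] //; by rewrite -e.
have Qz' : 0 < vz Q.
  rewrite /= bz subr0 lt_neqAle Kz // andbT; apply/eqP => e.
  apply: hf3 => v /hV3 [->|->|->] //; by rewrite -e.
have [x [vx1 vx2 hxb]] : exists x, [/\ is_vertex t1 x, is_vertex t2 x & x <> b].
  case: sh12 => x1 [x2 [hx12 h11 h12 h21 h22]].
  case: (pselect (x1 = b)) => [e|ne]; last by exists x1.
  by exists x2; split => //; rewrite -e; apply: nesym.
have [y [vy2 vy3 hyb]] : exists y, [/\ is_vertex t2 y, is_vertex t3 y & y <> b].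
  case: sh23 => x1 [x2 [hx12 h11 h12 h21 h22]].
  case: (pselect (x1 = b)) => [e|ne]; last by exists x1.
  by exists x2; split => //; rewrite -e; apply: nesym.
have hx : x = u \/ x = p1 by case: (hV1 x vx1) => [e|e|e]; [by []|left|right].
have hy : y = w \/ y = p3 by case: (hV3 y vy3) => [e|e|e]; [by []|left|right].
have relb : forall v v', dot (vsub v v') (vsub v v') = dot (vsub v b) (vsub v b)
   - 2 * dot (vsub v b) (vsub v' b) + dot (vsub v' b) (vsub v' b) by move=> v v'; apply: dist_rel.
have hQU : ~ dot Q U = 1/2.
  move=> e; have := horiz Uz Wz UU WW UW QQ e QW; lra.
have hPW : ~ dot Pp W = 1/2.
  move=> e; have := horiz Uz Wz UU WW UW PP PU e; lra.
have [vp12 [vp32 hPQ]] : is_vertex t2 p1 /\ is_vertex t2 p3 /\ dot Pp Q = 1/2.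
  case: hx => ex; case: hy => ey; subst x y.
  - exfalso; have uw : u <> w by move=> e; move: UW; rewrite /U /W e WW; lra.
    have := unit_vdist hu2 vx2 vy2 uw; rewrite relb -/U -/W UU WW; lra.
  - exfalso; case: (pselect (u = p3)) => [e|ne].
      by move: QW; rewrite /Q -e -/U => h; move: UW; rewrite h; lra.
    have := unit_vdist hu2 vx2 vy2 ne; rewrite relb -/U -/Q UU QQ => h.
    by apply: hQU; rewrite dotC; lra.
  - exfalso; case: (pselect (p1 = w)) => [e|ne].
      by move: PU; rewrite /Pp e -/W dotC => h; move: UW; rewrite h; lra.
    have := unit_vdist hu2 vx2 vy2 ne; rewrite relb -/Pp -/W PP WW => h.
    by apply: hPW; lra.
  - case: (pselect (p1 = p3)) => [e|ne].
      by exfalso; apply: hPW; rewrite /Pp e -/Q.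
    split => //; split => //.
    have := unit_vdist hu2 vx2 vy2 ne; rewrite relb -/Pp -/Q PP QQ => h; lra.
have on1 : forall v, is_vertex t1 v -> dot n1 (vsub v b) = 0.
  by move=> v hv; rewrite dot_subr (hv1 v hv).2 (hv1 b vb1).2 subrr.
have on2 : forall v, is_vertex t2 v -> dot n2 (vsub v b) = 0.
  by move=> v hv; rewrite dot_subr (hv2 v hv).2 (hv2 b vb2).2 subrr.
have on3 : forall v, is_vertex t3 v -> dot n3 (vsub v b) = 0.
  by move=> v hv; rewrite dot_subr (hv3 v hv).2 (hv3 b vb3).2 subrr.
have in1' : forall v, K v -> dot n1 (vsub v b) <= 0.
  by move=> v hv; rewrite dot_subr (hv1 b vb1).2 subr_le0; apply: sup1.
have in2' : forall v, K v -> dot n2 (vsub v b) <= 0.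
  by move=> v hv; rewrite dot_subr (hv2 b vb2).2 subr_le0; apply: sup2.
have in3' : forall v, K v -> dot n3 (vsub v b) <= 0.
  by move=> v hv; rewrite dot_subr (hv3 b vb3).2 subr_le0; apply: sup3.
have [z2 z13] := @core_vec R U W Pp Q n1 n2 n3 Uz Wz UU WW UW UW2 PP PU Pz' QQ QW hPQ Qz'
  hn1 (on1 u vu1) (on1 p1 vp1) (in1' w Kw) (in1' p3 Kp3)
  hn2 (on2 p1 vp12) (on2 p3 vp32) (in2' u Ku) (in2' w Kw)
  hn3 (on3 w vw3) (on3 p3 vp3) (in3' u Ku) (in3' p1 Kp1).
split.
  by exists n2, c2; split => // v hv; case: (hv2 v hv).
case: z13 => hz; [left; exists n1, c1 | right; exists n3, c3]; split => //.
- by move=> v hv; case: (hv1 v hv).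
- by move=> v hv; case: (hv3 v hv).
Qed.
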